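(* Let $X$ be a finite connected poset and $\theta\in\mathcal{M}(X)$. Then $\theta\in\mathcal{AM}(X)$ if and only if $s^+_{\theta,\Gamma}(z)-s^-_{\theta,\Gamma}(z)=t^+_{\theta,\Gamma}(z)-t^-_{\theta,\Gamma}(z)$ holds for every $z\in X$ and every closed semiwalk $\Gamma:u_0,\dots,u_m=u_0$ with $m\ge2$.
   Context: For $x<y$, $e_{xy}$ denotes the incidence-algebra basis element and $B=\{e_{xy}:x<y\}$. For a bijection $\theta:B\to B$ and a maximal chain $C:u_1<\dots<u_k$, $\theta$ is increasing on $C$ if there is a maximal chain $D:v_1<\dots<v_k$ with $\theta(e_{u_iu_j})=e_{v_iv_j}$ for all $i<j$, decreasing if $\theta(e_{u_iu_j})=e_{v_{k-j+1}v_{k-i+1}}$ for all $i<j$. $\mathcal{M}(X)$ is the set of bijections $B\to B$ increasing or decreasing on every maximal chain. A semiwalk is a sequence $u_0,\dots,u_m$ with $u_i<u_{i+1}$ or $u_i>u_{i+1}$ for each $i$; a walk is a semiwalk in which moreover one of $u_i,u_{i+1}$ covers the other for each $i$; (semi)walks are closed if $u_0=u_m$. For a closed semiwalk $\Gamma:u_0,\dots,u_m=u_0$ and $z\in X$: $s^+_{\theta,\Gamma}(z)=|\{i: u_i<u_{i+1},\ \exists w>z,\ \theta(e_{zw})=e_{u_iu_{i+1}}\}|$, $s^-_{\theta,\Gamma}(z)=|\{i: u_i>u_{i+1},\ \exists w>z,\ \theta(e_{zw})=e_{u_{i+1}u_i}\}|$, $t^+_{\theta,\Gamma}(z)=|\{i: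 u_i<u_{i+1},\ \exists w<z,\ \theta(e_{wz})=e_{u_iu_{i+1}}\}|$, $t^-_{\theta,\Gamma}(z)=|\{i: u_i>u_{i+1},\ \exists w<z,\ \theta(e_{wz})=e_{u_{i+1}u_i}\}|$, $0\le i\le m-1$. $\theta$ is admissible if $s^+-s^-=t^+-t^-$ at every $z$ for every closed walk; $\mathcal{AM}(X)$ is the set of admissible elements of $\mathcal{M}(X)$. *)

(* Defs.v *)
From HB Require Import structures.
From mathcomp Require Import all_boot all_order all_algebra.
Set Implicit Arguments. Unset Strict Implicit. Unset Printing Implicit Defensive.
Import Order.TTheory GRing.Theory Num.Theory.
Local Open Scope order_scope.

Section PosetDefs.
Context {d : Order.disp_t} {X : finPOrderType d}.

(* B = { e_xy : x < y }, represented by the pairs (x,y) with x < y. *)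
Definition Bset := {p : X * X | p.1 < p.2}.

Definition comparable_strict (x y : X) : bool := (x < y) || (y < x).
Definition connected_poset : Prop :=
  forall x y : X, connect comparable_strict x y.

Definition covers (x y : X) : bool := (x < y) && [forall z : X, ~~ ((x < z) && (z < y))].

Definition chain (s : seq X) : bool := sorted <%O s.
Definition maximal_chain (s : seq X) : Prop :=
  chain s /\ forall t : seq X, chain t -> {subset s <= t} -> {subset t <= s}.

Definition increasing_on (theta : Bset -> Bset) (C : seq X) : Prop :=
  exists D : seq X, [/\ maximal_chain D, size D = size C &
    forall (p : Bset) (i j : nat), (i < j)%N -> (j < size C)%N ->
      onth C i = Some (val p).1 -> onth C j = Some (val p).2 ->
      onth D i = Some (val (theta p)).1 /\ onth D j = Some (val (theta p)).2].

(* theta is decreasing on the chain C (0-indexed: v_{k-1-j}, v_{k-1-i}) *)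
Definition decreasing_on (theta : Bset -> Bset) (C : seq X) : Prop :=
  exists D : seq X, [/\ maximal_chain D, size D = size C &
    forall (p : Bset) (i j : nat), (i < j)%N -> (j < size C)%N ->
      onth C i = Some (val p).1 -> onth C j = Some (val p).2 ->
      onth D (size C - 1 - j) = Some (val (theta p)).1 /\
      onth D (size C - 1 - i) = Some (val (theta p)).2].

Definition inM (theta : Bset -> Bset) : Prop :=
  bijective theta /\
  forall C : seq X, maximal_chain C -> increasing_on theta C \/ decreasing_on theta C.

(* A (closed) semiwalk u_0 = x, u_1, ..., u_m is represented by x :: rest,
   with m = size rest. *)
Definition semiwalk (x : X) (rest : seq X) : bool := path comparable_strict x rest.
Definition closed_semiwalk (x : X) (rest : seq X) : bool :=
  semiwalk x rest && (last x rest == x).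
Definition walk (x : X) (rest : seq X) : bool :=
  path (fun a b => covers a b || covers b a) x rest.
Definition closed_walk (x : X) (rest : seq X) : bool :=
  walk x rest && (last x rest == x).

Definition steps (x : X) (rest : seq X) : seq (X * X) := zip (x :: rest) rest.

Definition s_plus (theta : Bset -> Bset) (x : X) (rest : seq X) (z : X) : nat :=
  count (fun e : X * X => (e.1 < e.2) &&
    [exists p : Bset, ((val p).1 == z) && (val (theta p) == e)]) (steps x rest).
Definition s_minus (theta : Bset -> Bset) (x : X) (rest : seq X) (z : X) : nat :=
  count (fun e : X * X => (e.2 < e.1) &&
    [exists p : Bset, ((val p).1 == z) && (val (theta p) == (e.2, e.1))]) (steps x rest).
Definition t_plus (theta : Bset -> Bset) (x : X) (rest : seq X) (z : X) : nat :=
  count (fun e : X * X => (e.1 < e.2) &&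
    [exists p : Bset, ((val p).2 == z) && (val (theta p) == e)]) (steps x rest).
Definition t_minus (theta : Bset -> Bset) (x : X) (rest : seq X) (z : X) : nat :=
  count (fun e : X * X => (e.2 < e.1) &&
    [exists p : Bset, ((val p).2 == z) && (val (theta p) == (e.2, e.1))]) (steps x rest).

Definition balanced (theta : Bset -> Bset) (x : X) (rest : seq X) (z : X) : Prop :=
  ((s_plus theta x rest z)%:Z - (s_minus theta x rest z)%:Z =
   (t_plus theta x rest z)%:Z - (t_minus theta x rest z)%:Z)%R.

Definition admissible (theta : Bset -> Bset) : Prop :=
  forall (x : X) (rest : seq X) (z : X), closed_walk x rest -> balanced theta x rest z.

Definition inAM (theta : Bset -> Bset) : Prop := inM theta /\ admissible theta.

End PosetDefs.

(* Main.v *)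
Require Import Defs.
From HB Require Import structures.
From mathcomp Require Import all_boot all_order all_algebra.
From mathcomp Require Import ring.
From Stdlib Require Import Classical.
Set Implicit Arguments. Unset Strict Implicit. Unset Printing Implicit Defensive.
Import Order.TTheory GRing.Theory Num.Theory.
Local Open Scope order_scope.

Definition th d (X : finPOrderType d) (theta : @Bset d X -> @Bset d X) (e : X * X) : X * X :=
  oapp (fun p : @Bset d X => val (theta p)) e (insub e).

Lemma thE d (X : finPOrderType d) (theta : @Bset d X -> @Bset d X) (p : @Bset d X) :
  th theta (val p) = val (theta p).
Proof. by rewrite /th valK. Qed.

Lemma th_lt d (X : finPOrderType d) (theta : @Bset d X -> @Bset d X) (e : X * X) :
  e.1 < e.2 -> (th theta e).1 < (th theta e).2.
Proof. by move=> h; rewrite /th insubT /=; exact: (valP (theta _)). Qed.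

Lemma th_inj d (X : finPOrderType d) (theta : @Bset d X -> @Bset d X) (e1 e2 : X * X) :
  injective theta -> e1.1 < e1.2 -> e2.1 < e2.2 -> th theta e1 = th theta e2 -> e1 = e2.
Proof.
move=> inj h1 h2; rewrite /th !insubT /= => /val_inj /inj.
by move/(congr1 val).
Qed.

Lemma chain_uniq d (X : finPOrderType d) (s : seq X) : chain s -> uniq s.
Proof. by apply: sorted_uniq; [exact: lt_trans | exact: ltxx]. Qed.

Lemma chain_size d (X : finPOrderType d) (s : seq X) : chain s -> size s <= #|X|.
Proof. by move=> /chain_uniq /card_uniqP <-; exact: max_card. Qed.

Lemma max_chain_exists d (X : finPOrderType d) (s : seq X) :
  chain s -> exists C, maximal_chain C /\ {subset s <= C}.
Proof.
suff H : forall n (s : seq X), chain s -> (#|X| - size s < n)%N ->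
  exists C, maximal_chain C /\ {subset s <= C}.
  by move=> cs; apply: (H (#|X| - size s).+1).
elim=> [//|n IH] s0 cs hn.
case: (classic (exists t, chain t /\ {subset s0 <= t} /\ ~ {subset t <= s0})).
  move=> [t [ct [st nts]]].
  have lt : (size s0 < size t)%N.
    rewrite ltn_neqAle uniq_leq_size ?andbT //; last exact: chain_uniq.
    apply/negP => /eqP e; apply: nts.
    have [_ E] := uniq_min_size (chain_uniq cs) st (eq_leq (esym e)).
    by move=> y; rewrite -E.
  have := chain_size ct => szt.
  have [C [mC sC]] := IH t ct (leq_trans (ltn_sub2l (leq_trans lt szt) lt) hn).
  by exists C; split => // y /st /sC.
move=> nex; exists s0; split => //; split => // t ct st.
by apply: NNPP => nts; apply: nex; exists t.
Qed.

Definition lt3 d (X : finPOrderType d) (t : X * X * X) : bool :=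
  (t.1.1 < t.1.2) && (t.1.2 < t.2).

Definition tri d (X : finPOrderType d) (theta : @Bset d X -> @Bset d X) (t s : X * X * X) : bool :=
  ((th theta (t.1.1, t.1.2) == (s.1.1, s.1.2)) && (th theta (t.1.2, t.2) == (s.1.2, s.2))
    && (th theta (t.1.1, t.2) == (s.1.1, s.2))) ||
  ((th theta (t.1.1, t.1.2) == (s.1.2, s.2)) && (th theta (t.1.2, t.2) == (s.1.1, s.1.2))
    && (th theta (t.1.1, t.2) == (s.1.1, s.2))).

Lemma onth_index d (X : finPOrderType d) (C : seq X) a :
  a \in C -> onth C (index a C) = Some a.
Proof.
move=> aC; rewrite onthE (nth_map a); last by rewrite index_mem.
by rewrite nth_index.
Qed.

Lemma index_lt d (X : finPOrderType d) (C : seq X) a b :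
  chain C -> a \in C -> b \in C -> a < b -> (index a C < index b C)%N.
Proof.
move=> cC aC bC ab.
rewrite ltn_neqAle; apply/andP; split.
  apply/negP => /eqP e.
  have : nth a C (index a C) = nth a C (index b C) by rewrite e.
  by rewrite !nth_index // => eab; move: ab; rewrite eab ltxx.
rewrite leqNgt; apply/negP => lt.
have := sorted_ltn_index (@lt_trans _ X) cC b a bC aC lt.
by move=> ba; move: (lt_trans ab ba); rewrite ltxx.
Qed.

Lemma forward d (X : finPOrderType d) (theta : @Bset d X -> @Bset d X) t :
  inM theta -> lt3 t -> exists s, lt3 s && tri theta t s.
Proof.
case: t => [[a b] c] [_ hM] /andP /= [hab hbc].
have hac := lt_trans hab hbc.
have cs : chain [:: a; b; c] by rewrite /chain /= hab hbc.
have [C [mC sC]] := max_chain_exists cs.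
have aC : a \in C by apply: sC; rewrite !inE eqxx.
have bC : b \in C by apply: sC; rewrite !inE eqxx orbT.
have cC : c \in C by apply: sC; rewrite !inE eqxx !orbT.
have cC' := mC.1.
have ij := index_lt cC' aC bC hab.
have jk := index_lt cC' bC cC hbc.
have ik := ltn_trans ij jk.
have ks : (index c C < size C)%N by rewrite index_mem.
have js := ltn_trans jk ks.
have oa := onth_index aC; have ob := onth_index bC; have oc := onth_index cC.
set A := th theta (a, b); set B := th theta (b, c); set Ac := th theta (a, c).
have lA : A.1 < A.2 by exact: th_lt.
have lB : B.1 < B.2 by exact: th_lt.
pose pab : @Bset d X := Sub (a, b) hab.
pose pbc : @Bset d X := Sub (b, c) hbc.
pose pac : @Bset d X := Sub (a, c) hac.
have eA : val (theta pab) = A by rewrite -thE.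
have eB : val (theta pbc) = B by rewrite -thE.
have eAc : val (theta pac) = Ac by rewrite -thE.
case: (hM C mC) => [[D [_ szD HD]] | [D [_ szD HD]]].
- have [h1 h2] := HD pab _ _ ij js oa ob.
  have [h3 h4] := HD pbc _ _ jk ks ob oc.
  have [h5 h6] := HD pac _ _ ik ks oa oc.
  rewrite eA in h1 h2; rewrite eB in h3 h4; rewrite eAc in h5 h6.
  have e1 : A.2 = B.1 by move: h2; rewrite h3 => -[].
  have e2 : Ac.1 = A.1 by move: h5; rewrite h1 => -[].
  have e3 : Ac.2 = B.2 by move: h6; rewrite h4 => -[].
  exists (A.1, A.2, B.2); apply/andP; split.
    by rewrite /lt3 /= lA e1 lB.
  apply/orP; left; rewrite /=.
  by rewrite -/A -/B -/Ac -!surjective_pairing e1 -surjective_pairing -e2 -e3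
     -surjective_pairing !eqxx.
- have [h1 h2] := HD pab _ _ ij js oa ob.
  have [h3 h4] := HD pbc _ _ jk ks ob oc.
  have [h5 h6] := HD pac _ _ ik ks oa oc.
  rewrite eA in h1 h2; rewrite eB in h3 h4; rewrite eAc in h5 h6.
  have e1 : A.1 = B.2 by move: h1; rewrite h4 => -[].
  have e2 : Ac.1 = B.1 by move: h5; rewrite h3 => -[].
  have e3 : Ac.2 = A.2 by move: h6; rewrite h2 => -[].
  exists (B.1, B.2, A.2); apply/andP; split.
    by rewrite /lt3 /= lB -e1 lA.
  apply/orP; right; rewrite /=.
  have q1 : A = (B.2, A.2) by rewrite -e1; case: (A).
  have q2 : B = (B.1, B.2) by case: (B).
  have q3 : Ac = (B.1, A.2) by rewrite -e2 -e3; case: (Ac).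
  by rewrite -/A -/B -/Ac -q1 -q2 -q3 !eqxx.
Qed.

Lemma tri_inj d (X : finPOrderType d) (theta : @Bset d X -> @Bset d X) t1 t2 s :
  injective theta -> lt3 t1 -> lt3 t2 -> tri theta t1 s -> tri theta t2 s -> t1 = t2.
Proof.
move=> inj.
case: t1 => [[a1 b1] c1]; case: t2 => [[a2 b2] c2]; case: s => [[u x] v].
rewrite /lt3 /tri /= => /andP[l1 m1] /andP[l2 m2].
have n1 := lt_trans l1 m1; have n2 := lt_trans l2 m2.
have TI := @th_inj d X theta _ _ inj.
move=> /orP[/andP[/andP[/eqP p1 /eqP p2] /eqP p3]|/andP[/andP[/eqP p1 /eqP p2] /eqP p3]]
       /orP[/andP[/andP[/eqP q1 /eqP q2] /eqP q3]|/andP[/andP[/eqP q1 /eqP q2] /eqP q3]].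
- have [-> ->] : (a1, c1) = (a2, c2) by apply: TI => //; rewrite p3 q3.
  have [_ ->] : (a1, b1) = (a2, b2) by apply: TI => //; rewrite p1 q1.
  by [].
- have [ea ec] : (a1, c1) = (a2, c2) by apply: TI => //; rewrite p3 q3.
  have [eb _] : (a1, b1) = (b2, c2) by apply: TI => //; rewrite p1 q2.
  by move: l2; rewrite -ea eb ltxx.
- have [ea ec] : (a1, c1) = (a2, c2) by apply: TI => //; rewrite p3 q3.
  have [eb _] : (b1, c1) = (a2, b2) by apply: TI => //; rewrite p2 q1.
  by move: l1; rewrite ea -eb ltxx.
- have [-> ->] : (a1, c1) = (a2, c2) by apply: TI => //; rewrite p3 q3.
  have [_ ->] : (a1, b1) = (a2, b2) by apply: TI => //; rewrite p1 q1.
  by [].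
Qed.

Lemma backward d (X : finPOrderType d) (theta : @Bset d X -> @Bset d X) s :
  inM theta -> lt3 s -> exists t, lt3 t && tri theta t s.
Proof.
move=> hM ls.
have inj : injective theta by case: hM.1 => g g1 _; exact: can_inj g1.
pose T := [set t : X * X * X | lt3 t].
pose f t := odflt t [pick s' | lt3 s' && tri theta t s'].
have fP : forall t, t \in T -> lt3 (f t) && tri theta t (f t).
  move=> t; rewrite inE => lt; rewrite /f; case: pickP => [s' //|/= none].
  by have [s' hs'] := forward hM lt; move: (none s'); rewrite hs'.
have sub : f @: T \subset T.
  by apply/subsetP => y /imsetP[t tT ->]; rewrite inE; case/andP: (fP t tT).
have finj : {in T &, injective f}.
  move=> t1 t2 h1 h2 e.
  have /andP[_ c1] := fP _ h1; have /andP[_ c2] := fP _ h2.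
  rewrite e in c1.
  by apply: (tri_inj inj _ _ c1 c2); rewrite -?inE.
have eT : f @: T = T.
  by apply/eqP; rewrite eqEcard sub card_in_imset // leqnn.
have : s \in f @: T by rewrite eT inE.
case/imsetP => t tT ->; exists t.
by have /andP[_ c] := fP _ tT; rewrite c andbT -inE.
Qed.

Definition Sb d (X : finPOrderType d) (theta : @Bset d X -> @Bset d X) (z : X) (e : X * X) : bool :=
  [exists p : @Bset d X, ((val p).1 == z) && (val (theta p) == e)].
Definition Tb d (X : finPOrderType d) (theta : @Bset d X -> @Bset d X) (z : X) (e : X * X) : bool :=
  [exists p : @Bset d X, ((val p).2 == z) && (val (theta p) == e)].
Definition gg d (X : finPOrderType d) (theta : @Bset d X -> @Bset d X) (z : X) (e : X * X) : int :=
  ((Sb theta z e : nat)%:Z - (Tb theta z e : nat)%:Z)%R.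
Definition hh d (X : finPOrderType d) (theta : @Bset d X -> @Bset d X) (z : X) (e : X * X) : int :=
  if e.1 < e.2 then gg theta z e else if e.2 < e.1 then (- gg theta z (e.2, e.1))%R else 0%R.
Fixpoint Hs d (X : finPOrderType d) (theta : @Bset d X -> @Bset d X) (z : X) (x : X) (rest : seq X) : int :=
  if rest is y :: l then (hh theta z (x, y) + Hs theta z y l)%R else 0%R.

Lemma Hs_balanced d (X : finPOrderType d) (theta : @Bset d X -> @Bset d X) z x rest :
  (((s_plus theta x rest z)%:Z - (s_minus theta x rest z)%:Z) -
   ((t_plus theta x rest z)%:Z - (t_minus theta x rest z)%:Z))%R = Hs theta z x rest.
Proof.
elim: rest x => [|y l IH] x //=.
rewrite -IH /s_plus /s_minus /t_plus /t_minus.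
have -> : steps x (y :: l) = (x, y) :: steps y l by [].
rewrite /= -/(Sb theta z (x, y)) -/(Tb theta z (x, y)) -/(Sb theta z (y, x)) -/(Tb theta z (y, x)).
rewrite /hh /gg /=.
set S1 := count _ (steps y l); set S2 := count _ (steps y l);
set S3 := count _ (steps y l); set S4 := count _ (steps y l).
case: (boolP (x < y)) => hxy.
  have -> : (y < x) = false by apply/negbTE; rewrite lt_gtF.
  rewrite /= !PoszD; case: (Sb _ _ _); case: (Tb _ _ _); rewrite /=; ring.
case: (boolP (y < x)) => hyx.
  rewrite /= !PoszD; case: (Sb _ _ _); case: (Tb _ _ _); rewrite /=; ring.
by rewrite /= !add0n; ring.
Qed.

Lemma balancedE d (X : finPOrderType d) (theta : @Bset d X -> @Bset d X) z x rest :
  balanced theta x rest z <-> Hs theta z x rest = 0%R.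
Proof.
rewrite -Hs_balanced /balanced; split => [->|/eqP]; first by rewrite subrr.
by rewrite subr_eq0 => /eqP.
Qed.

Lemma Sb_th d (X : finPOrderType d) (theta : @Bset d X -> @Bset d X) z e0 :
  injective theta -> e0.1 < e0.2 ->
  Sb theta z (th theta e0) = (e0.1 == z) /\ Tb theta z (th theta e0) = (e0.2 == z).
Proof.
move=> inj h.
have key : forall p : @Bset d X, (val (theta p) == th theta e0) = (val p == e0).
  move=> p; apply/eqP/eqP => [e|<-]; last by rewrite thE.
  by apply: (th_inj inj (valP p) h); rewrite thE.
split; apply/existsP/idP.
- by case=> p; rewrite (key p) => /andP[/eqP <- /eqP ->].
- by move=> hz; exists (Sub e0 h); rewrite (key (Sub e0 h)) SubK eqxx andbT.
- by case=> p; rewrite (key p) => /andP[/eqP <- /eqP ->].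
- by move=> hz; exists (Sub e0 h); rewrite (key (Sub e0 h)) SubK eqxx andbT.
Qed.

Lemma gg_th d (X : finPOrderType d) (theta : @Bset d X -> @Bset d X) z e0 :
  injective theta -> e0.1 < e0.2 ->
  gg theta z (th theta e0) = (((e0.1 == z) : nat)%:Z - ((e0.2 == z) : nat)%:Z)%R.
Proof. by move=> inj h; rewrite /gg; case: (Sb_th z inj h) => -> ->. Qed.

Lemma hh_swap d (X : finPOrderType d) (theta : @Bset d X -> @Bset d X) z u v :
  hh theta z (v, u) = (- hh theta z (u, v))%R.
Proof.
rewrite /hh /=; case: (boolP (u < v)) => huv.
  by rewrite lt_gtF.
by case: (v < u); rewrite ?opprK ?oppr0.
Qed.

Lemma hh_add d (X : finPOrderType d) (theta : @Bset d X -> @Bset d X) z u x v :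
  inM theta -> u < x -> x < v ->
  hh theta z (u, v) = (hh theta z (u, x) + hh theta z (x, v))%R.
Proof.
move=> hM ux xv.
have inj : injective theta by case: hM.1 => g g1 _; exact: can_inj g1.
have uv := lt_trans ux xv.
have [[[a b] c] /andP[/andP[/= ab bc] tr]] := backward (s := (u, x, v)) hM (introT andP (conj ux xv)).
have ac := lt_trans ab bc.
rewrite /hh /= ux xv uv.
move: tr; rewrite /tri /= => /orP[/andP[/andP[/eqP p1 /eqP p2] /eqP p3]|/andP[/andP[/eqP p1 /eqP p2] /eqP p3]].
- rewrite -p1 -p2 -p3 !gg_th //.
  case: (a == z); case: (b == z); case: (c == z); rewrite /=; ring.
- rewrite -p1 -p2 -p3 !gg_th //.
  case: (a == z); case: (b == z); case: (c == z); rewrite /=; ring.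
Qed.

Definition betw d (X : finPOrderType d) (u v y : X) : bool :=
  ((u < y) && (y < v)) || ((v < y) && (y < u)).

Lemma betwC d (X : finPOrderType d) (u v y : X) : betw u v y = betw v u y.
Proof. by rewrite /betw orbC. Qed.

Lemma betw_sub d (X : finPOrderType d) (u v x y : X) :
  betw u v x -> betw u x y -> betw u v y.
Proof.
rewrite /betw => /orP[/andP[ux xv]|/andP[vx xu]] /orP[/andP[uy yx]|/andP[xy yu]].
- by rewrite uy (lt_trans yx xv).
- by move: (lt_trans ux xy) (yu) => /lt_gtF ->.
- by move: (lt_trans uy yx) (xu) => /lt_gtF ->.
- by rewrite (lt_trans vx xy) yu orbT.
Qed.

Lemma betw_lt d (X : finPOrderType d) (u v x : X) :
  betw u v x -> (#|[pred y | betw u x y]| < #|[pred y | betw u v y]|)%N.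
Proof.
move=> bx; apply: proper_card; apply/properP; split.
  by apply/subsetP => y; rewrite !inE; exact: betw_sub.
by exists x; rewrite !inE // /betw ltxx !andbF.
Qed.

Lemma refine d (X : finPOrderType d) (theta : @Bset d X -> @Bset d X) z :
  inM theta -> forall u v : X, comparable_strict u v ->
  exists w, [/\ walk u w, last u w = v & Hs theta z u w = hh theta z (u, v)].
Proof.
move=> hM.
suff H : forall n (u v : X), (#|[pred y | betw u v y]| < n)%N -> comparable_strict u v ->
  exists w, [/\ walk u w, last u w = v & Hs theta z u w = hh theta z (u, v)].
  by move=> u v; apply: H (ltnSn _).
elim=> [//|n IH] u v hn cuv.
rewrite ltnS in hn.
case: (boolP (covers u v || covers v u)) => hc.
  by exists [:: v]; split => //=; [rewrite /walk /= hc | rewrite addr0].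
have [x bx] : exists x, betw u v x.
  case/orP: cuv => l.
  - have : ~~ covers u v by move: hc; rewrite negb_or => /andP[].
    rewrite /covers l /= => /forallPn[x]; rewrite negbK => hx.
    by exists x; rewrite /betw hx.
  - have : ~~ covers v u by move: hc; rewrite negb_or => /andP[].
    rewrite /covers l /= => /forallPn[x]; rewrite negbK => hx.
    by exists x; rewrite /betw hx orbT.
have b1 : (#|[pred y | betw u x y]| < n)%N by exact: leq_trans (betw_lt bx) hn.
have b2 : (#|[pred y | betw x v y]| < n)%N.
  have e : #|[pred y | betw x v y]| = #|[pred y | betw v x y]|.
    by apply: eq_card => y; rewrite !inE betwC.
  have e' : #|[pred y | betw u v y]| = #|[pred y | betw v u y]|.
    by apply: eq_card => y; rewrite !inE betwC.
  rewrite e; apply: leq_trans _ hn; rewrite e'; apply: betw_lt; by rewrite betwC.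
have c1 : comparable_strict u x.
  by move: bx; rewrite /betw /comparable_strict => /orP[/andP[-> _]|/andP[_ ->]]; rewrite ?orbT.
have c2 : comparable_strict x v.
  by move: bx; rewrite /betw /comparable_strict => /orP[/andP[_ ->]|/andP[-> _]]; rewrite ?orbT.
have [w1 [p1 l1 s1]] := IH u x b1 c1.
have [w2 [p2 l2 s2]] := IH x v b2 c2.
exists (w1 ++ w2); split.
- by rewrite /walk cat_path -/(walk u w1) p1 l1.
- by rewrite last_cat l1.
- have Hcat : forall (a : X) s1 s2, Hs theta z a (s1 ++ s2) =
      (Hs theta z a s1 + Hs theta z (last a s1) s2)%R.
    by move=> a s; elim: s a => [|b s IHs] a s' /=; rewrite ?add0r // IHs addrA.
  rewrite Hcat l1 s1 s2.
  move: bx; rewrite /betw => /orP[/andP[ux xv]|/andP[vx xu]].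
    by rewrite (hh_add z hM ux xv).
  rewrite [hh _ _ (u, v)]hh_swap [hh _ _ (u, x)]hh_swap [hh _ _ (x, v)]hh_swap.
  by rewrite (hh_add z hM vx xu) opprD addrC.
Qed.

Lemma Hs_cat d (X : finPOrderType d) (theta : @Bset d X -> @Bset d X) z (a : X) s1 s2 :
  Hs theta z a (s1 ++ s2) = (Hs theta z a s1 + Hs theta z (last a s1) s2)%R.
Proof. by elim: s1 a => [|b s IHs] a /=; rewrite ?add0r // IHs addrA. Qed.

Lemma semi_to_walk d (X : finPOrderType d) (theta : @Bset d X -> @Bset d X) z :
  inM theta -> forall (x : X) rest, semiwalk x rest ->
  exists w, [/\ walk x w, last x w = last x rest & Hs theta z x w = Hs theta z x rest].
Proof.
move=> hM x rest; elim: rest x => [|y l IH] x.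
  by move=> _; exists [::].
rewrite /semiwalk /= => /andP[cxy sw].
have [w1 [p1 l1 s1]] := refine z hM cxy.
have [w2 [p2 l2 s2]] := IH y sw.
exists (w1 ++ w2); split.
- by rewrite /walk cat_path -/(walk x w1) p1 l1.
- by rewrite last_cat l1 l2.
- by rewrite Hs_cat l1 s1 s2.
Qed.

Theorem corollary3p2 (d : Order.disp_t) (X : finPOrderType d)
    (theta : @Bset d X -> @Bset d X) :
  @connected_poset d X -> inM theta ->
  (inAM theta <->
   forall (z x : X) (rest : seq X),
     closed_semiwalk x rest -> (2 <= size rest)%N -> balanced theta x rest z).
Proof.
move=> _ hM; split.
  move=> [_ adm] z x rest /andP[sw /eqP hl] _.
  have [w [pw lw sw']] := semi_to_walk z hM sw.
  apply/balancedE; rewrite -sw'; apply/balancedE; apply: adm.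
  by rewrite /closed_walk pw lw hl eqxx.
move=> H; split => // x rest z /andP[wk /eqP hl].
case: rest wk hl => [|y [|y' l]] wk hl.
- by apply/balancedE.
- move: wk; rewrite /walk /= andbT /= in hl *; rewrite hl /covers ltxx.
  by [].
- apply: H => //; rewrite /closed_semiwalk hl eqxx andbT /semiwalk.
  apply: sub_path wk => a b /orP[/andP[h _]|/andP[h _]];
    by rewrite /comparable_strict h ?orbT.
Qed.
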